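(* Let $\beta>0$, let $u_0,k$ be real, let $f(u)=(u-u_0)(k-u)$, and let $\Phi(u)=\beta\left(-\frac{u^4}{4}+\frac{k+u_0}{3}u^3-\frac{ku_0}{2}u^2\right)$. Let $\delta$ be the involution defined in the context and put $w=\delta(u)$. Then: (a) $uf(u)+wf(w)<0$ in the case $0<u_0<k<2u_0$ (for all $u\in(u_0,k)$) and in the case $k>0$, $u_0<-k$ (for all $u\in(0,k)$); (b) $uf(u)+wf(w)>0$ in the case $k>0$, $-k<u_0<0$ (for all $u\in(0,u_1)$).
   Context: The involution $\delta$ is defined by $\Phi(\delta(u))=\Phi(u)$ with $\delta(u)$ on the other side of the relevant center, as follows. Case $0<u_0<k<2u_0$: let $w_1$ be the unique point of $(0,u_0)$ with $\Phi(w_1)=\Phi(k)$; for $u\in(u_0,k)$, $\delta(u)$ is the unique $w\in(w_1,u_0)$ with $\Phi(w)=\Phi(u)$. Case $k>0$, $-k<u_0<0$: let $u_1$ be the unique point of $(0,k)$ with $\Phi(u_1)=\Phi(u_0)$; for $u\in(0,u_1)$, $\delta(u)$ is the unique $w\in(u_0,0)$ with $\Phi(w)=\Phi(u)$. Case $k>0$, $u_0<-k$: let $w_2$ be the unique point of $(u_0,0)$ with $\Phi(w_2)=\Phi(k)$; for $u\in(0,k)$, $\delta(u)$ is the unique $w\in(w_2,0)$ with $\Phi(w)=\Phi(u)$. *)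

(* Defs.v *)
From Stdlib Require Import Reals Lra.
Open Scope R_scope.

Definition fq (u0 k u : R) : R := (u - u0) * (k - u).

Definition Phi (beta u0 k u : R) : R :=
  beta * (- u ^ 4 / 4 + (k + u0) / 3 * u ^ 3 - k * u0 / 2 * u ^ 2).

(* Main.v *)
Require Import Defs.
From Stdlib Require Import Reals.
From Stdlib Require Import Lra Psatz.
From Coquelicot Require Import Coquelicot.
Open Scope R_scope.

Lemma Phi_der (beta u0 k s : R) (x : R) :
  derivable_pt_lim (fun x => s * Phi beta u0 k x) x (s * beta * (x * fq u0 k x)).
Proof.
  apply is_derive_Reals. unfold Phi, fq. auto_derive; [exact I|]. field.
Qed.

Lemma Phi_mono (beta u0 k s a b : R) : a < b ->
  (forall t, a < t < b -> 0 < s * beta * (t * fq u0 k t)) ->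
  forall x y, a <= x <= b -> a <= y <= b -> x < y ->
  s * Phi beta u0 k x < s * Phi beta u0 k y.
Proof.
  intros Hab Ht.
  set (pr := fun x => exist (fun l => derivable_pt_lim (fun x => s * Phi beta u0 k x) x l) _ (Phi_der beta u0 k s x)
     : derivable_pt (fun x => s * Phi beta u0 k x) x).
  apply (derive_increasing_interv a b _ pr Hab).
  intros t H. simpl. apply Ht; exact H.
Qed.

Lemma key (beta u0 k u w : R) : 0 < beta -> w <> u ->
  Phi beta u0 k w = Phi beta u0 k u ->
  u * fq u0 k u + w * fq u0 k w = (u+w)*(u+w-2*k)*(u+w-2*u0)/2.
Proof.
  intros Hb Hwu HP.
  assert (E: (w-u)*(2*(u * fq u0 k u + w * fq u0 k w) - (u+w)*(u+w-2*k)*(u+w-2*u0))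
            = 12/beta*(Phi beta u0 k w - Phi beta u0 k u)).
  { unfold Phi, fq. field. lra. }
  rewrite HP, Rminus_diag, Rmult_0_r in E.
  apply Rmult_integral in E. destruct E as [E|E]; [lra|lra].
Qed.

Lemma odd1 (beta u0 k t : R) :
  Phi beta u0 k (u0+t) - Phi beta u0 k (u0-t) = -2*beta*(2*u0-k)*t^3/3.
Proof. unfold Phi. field. Qed.

Lemma odd2 (beta u0 k t : R) :
  Phi beta u0 k t - Phi beta u0 k (-t) = 2*beta*(k+u0)*t^3/3.
Proof. unfold Phi. field. Qed.

Theorem lemma3p3 (beta u0 k : R) : 0 < beta ->
  ((0 < u0 /\ u0 < k /\ k < 2 * u0) ->
     forall w1, 0 < w1 < u0 -> Phi beta u0 k w1 = Phi beta u0 k k ->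
     forall u w, u0 < u < k -> w1 < w < u0 -> Phi beta u0 k w = Phi beta u0 k u ->
     u * fq u0 k u + w * fq u0 k w < 0) /\
  ((0 < k /\ u0 < - k) ->
     forall w2, u0 < w2 < 0 -> Phi beta u0 k w2 = Phi beta u0 k k ->
     forall u w, 0 < u < k -> w2 < w < 0 -> Phi beta u0 k w = Phi beta u0 k u ->
     u * fq u0 k u + w * fq u0 k w < 0) /\
  ((0 < k /\ - k < u0 /\ u0 < 0) ->
     forall u1, 0 < u1 < k -> Phi beta u0 k u1 = Phi beta u0 k u0 ->
     forall u w, 0 < u < u1 -> u0 < w < 0 -> Phi beta u0 k w = Phi beta u0 k u ->
     u * fq u0 k u + w * fq u0 k w > 0).
Proof.
  intros Hb. split; [|split].
  - intros [H1 [H2 H3]] w1 Hw1 _ u w Hu Hw HP.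
    rewrite (key beta u0 k u w Hb) by lra; auto.
    assert (Hv : w > 2*u0 - u).
    { destruct (Rlt_or_le (2*u0-u) w) as [h|h]; [lra|exfalso].
      assert (Hlt : Phi beta u0 k u < Phi beta u0 k (2*u0-u)).
      { pose proof (odd1 beta u0 k (u-u0)) as O.
        replace (u0+(u-u0)) with u in O by ring.
        replace (u0-(u-u0)) with (2*u0-u) in O by ring.
        assert (0 < (u-u0)^3) by (apply pow_lt; lra).
        assert (0 < beta*(2*u0-k)) by (apply Rmult_lt_0_compat; lra).
        nra. }
      destruct h as [h|h].
      + assert (M := Phi_mono beta u0 k (-1) 0 u0 H1).
        assert (Hd : forall t, 0 < t < u0 -> 0 < -1*beta*(t*fq u0 k t)).
        { intros t Ht. unfold fq.
          assert (0 < t*((u0-t)*(k-t))).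
          { apply Rmult_lt_0_compat; [lra|apply Rmult_lt_0_compat; lra]. }
          nra. }
        specialize (M Hd w (2*u0-u) ltac:(lra) ltac:(lra) h). lra.
      + rewrite h in HP. lra. }
    set (a := u+w).
    assert (0 < a) by (unfold a; lra).
    assert (0 < (a-2*u0)) by (unfold a; lra).
    assert (0 < (2*k-a)) by (unfold a; lra).
    assert (0 < a*(a-2*u0)) by (apply Rmult_lt_0_compat; lra).
    nra.
  - intros [H1 H2] w2 Hw2 _ u w Hu Hw HP.
    rewrite (key beta u0 k u w Hb) by lra; auto.
    assert (Hv : w > - u).
    { destruct (Rlt_or_le (-u) w) as [h|h]; [lra|exfalso].
      assert (Hlt : Phi beta u0 k u < Phi beta u0 k (-u)).
      { pose proof (odd2 beta u0 k u) as O.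
        assert (0 < u^3) by (apply pow_lt; lra).
        assert (0 < beta*(-(k+u0))) by (apply Rmult_lt_0_compat; lra).
        nra. }
      destruct h as [h|h].
      + assert (M := Phi_mono beta u0 k (-1) u0 0 ltac:(lra)).
        assert (Hd : forall t, u0 < t < 0 -> 0 < -1*beta*(t*fq u0 k t)).
        { intros t Ht. unfold fq.
          assert (0 < (-t)*((t-u0)*(k-t))).
          { apply Rmult_lt_0_compat; [lra|apply Rmult_lt_0_compat; lra]. }
          nra. }
        specialize (M Hd w (-u) ltac:(lra) ltac:(lra) h). lra.
      + rewrite h in HP. lra. }
    set (a := u+w).
    assert (0 < a) by (unfold a; lra).
    assert (0 < (a-2*u0)) by (unfold a; lra).
    assert (0 < (2*k-a)) by (unfold a; lra).
    assert (0 < a*(a-2*u0)) by (apply Rmult_lt_0_compat; lra).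
    nra.
  - intros [H1 [H2 H3]] u1 Hu1 HP1 u w Hu Hw HP.
    rewrite (key beta u0 k u w Hb) by lra; auto.
    assert (Hinc := Phi_mono beta u0 k 1 0 k H1).
    assert (Hd1 : forall t, 0 < t < k -> 0 < 1*beta*(t*fq u0 k t)).
    { intros t Ht. unfold fq.
      assert (0 < t*((t-u0)*(k-t))).
      { apply Rmult_lt_0_compat; [lra|apply Rmult_lt_0_compat; lra]. }
      nra. }
    assert (Hdec := Phi_mono beta u0 k (-1) u0 0 H3).
    assert (Hd2 : forall t, u0 < t < 0 -> 0 < -1*beta*(t*fq u0 k t)).
    { intros t Ht. unfold fq.
      assert (0 < (-t)*((t-u0)*(k-t))).
      { apply Rmult_lt_0_compat; [lra|apply Rmult_lt_0_compat; lra]. }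
      nra. }
    assert (Hu1' : u1 < - u0).
    { destruct (Rlt_or_le u1 (-u0)) as [h|h]; [lra|exfalso].
      assert (Hlt : Phi beta u0 k u0 < Phi beta u0 k (-u0)).
      { pose proof (odd2 beta u0 k u0) as O.
        assert (0 < (-u0)^3) by (apply pow_lt; lra).
        replace ((-u0)^3) with (-(u0^3)) in * by ring.
        assert (0 < beta*(k+u0)) by (apply Rmult_lt_0_compat; lra).
        nra. }
      destruct h as [h|h].
      + specialize (Hinc Hd1 (-u0) u1 ltac:(lra) ltac:(lra) h). lra.
      + rewrite h in Hlt. lra. }
    assert (Hv : w < - u).
    { destruct (Rlt_or_le w (-u)) as [h|h]; [lra|exfalso].
      assert (Hlt : Phi beta u0 k (-u) < Phi beta u0 k u).
      { pose proof (odd2 beta u0 k u) as O.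
        assert (0 < u^3) by (apply pow_lt; lra).
        assert (0 < beta*(k+u0)) by (apply Rmult_lt_0_compat; lra).
        nra. }
      destruct h as [h|h].
      + specialize (Hdec Hd2 (-u) w ltac:(lra) ltac:(lra) h). lra.
      + rewrite <- h in HP. lra. }
    set (a := u+w).
    assert (a < 0) by (unfold a; lra).
    assert (0 < (a-2*u0)) by (unfold a; lra).
    assert (0 < (2*k-a)) by (unfold a; lra).
    assert (0 < (-a)*(a-2*u0)) by (apply Rmult_lt_0_compat; lra).
    nra.
Qed.
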